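(* Let $\langle E,\rightarrow\rangle$ be a computation in which some events are designated as local checkpoints, let $b$ be the conjunctive predicate that holds at a consistent cut iff, for every process, the last event of that process in the cut is a local checkpoint, and let $S$ be the slice of $\langle E,\rightarrow\rangle$ with respect to $b$. A set $X$ of local checkpoints can belong to the same consistent global snapshot (i.e., there is a non-trivial consistent cut of $\langle E,\rightarrow\rangle$ satisfying $b$ whose frontier contains $X$) if and only if every pair of (not necessarily distinct) elements of $X$ is consistent in $S$.
   Context: A computation is a directed graph $\langle E, \rightarrow\rangle$ whose vertices (events) are partitioned among processes, events on each process totally ordered, each process having an initial event (first) and final event (last), whose path relation contains Lamport's happened-before relation, with all initial events in one strongly connected component and all final events in one. $\top$ is the set of final events and $\mathrm{succ}(e)$ the successor of $e$ on its process. A vertex subset $C$ of a directed graph is a consistent cut if for every edge $(u,v)$, $v\in C$ implies $u\in C$. The frontier of a consistent cut $C$ is $\{e\in C \mid e\notin\top \Rightarrow \mathrm{succ}(e)\notin C\}$. Two events (possibly equal) are consistent in a graph if both belong to the frontier of some consistent cut of that graph. A conjunctive predicate is a conjunction of local predicates, each depending on one process and evaluated at the last event of that process in the cut. The slice with respect to $b$ is a directed graph on $E$ whose consistent cuts include every consistent cut of the computation satisfying $b$ and which has the fewest consistent cuts among all such graphs. *)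

(* Defs.v *)
From mathcomp Require Import all_boot.
Set Implicit Arguments. Unset Strict Implicit. Unset Printing Implicit Defensive.

(* A computation over a finite set of events [E] and processes [P]:
   [proc e] is the process of event [e], [pidx e] its position (0-based) on
   that process, [msg] the message relation, [edge] the graph edges. *)

Definition psucc (P E : finType) (proc : E -> P) (pidx : E -> nat) : rel E :=
  fun e f => (proc f == proc e) && (pidx f == (pidx e).+1).

Definition is_final (P E : finType) (proc : E -> P) (pidx : E -> nat) (e : E) : bool :=
  [forall f, ~~ psucc proc pidx e f].

Definition is_initial (E : finType) (pidx : E -> nat) (e : E) : bool :=
  pidx e == 0.

Definition hb (P E : finType) (proc : E -> P) (pidx : E -> nat) (msg : rel E) : rel E :=
  connect (fun x y => psucc proc pidx x y || msg x y).

Definition is_computation (P E : finType) (proc : E -> P) (pidx : E -> nat)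
    (msg : rel E) (edge : rel E) : Prop :=
  [/\ [/\
      (forall e f, proc e = proc f -> pidx e = pidx f -> e = f),
      (forall e j, j < pidx e -> exists2 f, proc f = proc e & pidx f = j)
      &
      (forall p, exists e, proc e = p)],
      (forall e f, hb proc pidx msg e f -> connect edge e f),
      (forall e f, is_initial pidx e -> is_initial pidx f ->
                   connect edge e f)
    &
      (forall e f, is_final proc pidx e -> is_final proc pidx f ->
                   connect edge e f)].

Definition consistent_cut (E : finType) (g : rel E) (C : {set E}) : bool :=
  [forall u, forall v, g u v ==> (v \in C) ==> (u \in C)].

Definition cuts (E : finType) (g : rel E) : {set {set E}} :=
  [set C : {set E} | consistent_cut g C].

Definition frontier (P E : finType) (proc : E -> P) (pidx : E -> nat)
    (C : {set E}) : {set E} :=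
  [set e in C | [forall f, psucc proc pidx e f ==> (f \notin C)]].

Definition consistent_in (P E : finType) (proc : E -> P) (pidx : E -> nat)
    (g : rel E) (e f : E) : Prop :=
  exists C : {set E}, [/\ consistent_cut g C,
                          e \in frontier proc pidx C & f \in frontier proc pidx C].

Definition last_in (P E : finType) (proc : E -> P) (pidx : E -> nat)
    (C : {set E}) (p : P) (e : E) : Prop :=
  [/\ e \in C, proc e = p &
      forall f, f \in C -> proc f = p -> pidx f <= pidx e].

Definition sat_b (P E : finType) (proc : E -> P) (pidx : E -> nat)
    (ckpt : {set E}) (C : {set E}) : Prop :=
  forall p, exists2 e, last_in proc pidx C p e & e \in ckpt.

Definition is_slice (P E : finType) (proc : E -> P) (pidx : E -> nat)
    (edge : rel E) (ckpt : {set E}) (S : rel E) : Prop :=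
  let incl (G : rel E) := forall C : {set E}, consistent_cut edge C ->
         sat_b proc pidx ckpt C -> consistent_cut G C in
  incl S /\ (forall G : rel E, incl G -> #|cuts S| <= #|cuts G|).

Definition nontrivial (E : finType) (C : {set E}) : bool :=
  (C != set0) && (C != setT).

(* Main.v *)
Require Import Defs.
From mathcomp Require Import all_boot.
Set Implicit Arguments. Unset Strict Implicit. Unset Printing Implicit Defensive.

Lemma cc_connect (E : finType) (g : rel E) C u v :
  consistent_cut g C -> connect g u v -> v \in C -> u \in C.
Proof.
move=> Hc /connectP [p Hp ->] {v}.
elim: p u Hp => [|w p IH] u //= /andP [Huw Hp] Hl.
have Hw := IH w Hp Hl.
by move: (forallP (forallP Hc u) w) => /implyP /(_ Huw) /implyP /(_ Hw).
Qed.

Lemma cc_I (E : finType) (g : rel E) A B :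
  consistent_cut g A -> consistent_cut g B -> consistent_cut g (A :&: B).
Proof.
move=> HA HB; apply/forallP => u; apply/forallP => v; apply/implyP => Huv.
apply/implyP; rewrite !inE => /andP [HvA HvB].
move: (forallP (forallP HA u) v) => /implyP /(_ Huv) /implyP /(_ HvA) ->.
by move: (forallP (forallP HB u) v) => /implyP /(_ Huv) /implyP /(_ HvB) ->.
Qed.

Lemma cc_U (E : finType) (g : rel E) A B :
  consistent_cut g A -> consistent_cut g B -> consistent_cut g (A :|: B).
Proof.
move=> HA HB; apply/forallP => u; apply/forallP => v; apply/implyP => Huv.
apply/implyP; rewrite !inE => /orP [HvA | HvB].
  by move: (forallP (forallP HA u) v) => /implyP /(_ Huv) /implyP /(_ HvA) ->.
by move: (forallP (forallP HB u) v) => /implyP /(_ Huv) /implyP /(_ HvB) ->; rewrite orbT.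
Qed.

Lemma same_proc_connect (P E : finType) (proc : E -> P) (pidx : E -> nat)
    (msg edge : rel E) (Hc : is_computation proc pidx msg edge) (e f : E) :
  proc e = proc f -> pidx e <= pidx f -> connect edge e f.
Proof.
case: Hc => [[Hinj Hcont _] Hhb _ _] Hp Hle.
apply: Hhb.
have H : forall k f, proc f = proc e -> pidx f = pidx e + k -> hb proc pidx msg e f.
  elim=> [|k IH] g Hpg Hk.
    rewrite addn0 in Hk.
    have -> : g = e by apply: Hinj.
    exact: connect0.
  have Hlt : pidx e + k < pidx g by rewrite Hk addnS ltnSn.
  have [h Hh1 Hh2] := Hcont g (pidx e + k) Hlt.
  apply: connect_trans (IH h _ Hh2) (connect1 _); first by rewrite Hh1.
  apply/orP; left; rewrite /psucc Hh1 eqxx Hk Hh2 addnS eqxx //.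
apply: (H (pidx f - pidx e)); first by [].
by rewrite subnKC.
Qed.

Lemma satb_I (P E : finType) (proc : E -> P) (pidx : E -> nat)
    (msg edge : rel E) (Hc : is_computation proc pidx msg edge) ckpt A B :
  consistent_cut edge A -> consistent_cut edge B ->
  sat_b proc pidx ckpt A -> sat_b proc pidx ckpt B -> sat_b proc pidx ckpt (A :&: B).
Proof.
move=> cA cB sA sB p.
have [e1 [He1 Hp1 Hm1] Hk1] := sA p.
have [e2 [He2 Hp2 Hm2] Hk2] := sB p.
case: (leqP (pidx e1) (pidx e2)) => Hle.
- exists e1 => //; split => //.
  + rewrite inE He1 /=. apply: (cc_connect cB _ He2).
    apply: (same_proc_connect Hc) => //; by rewrite Hp1 Hp2.
  + move=> f; rewrite inE => /andP [Hf1 _] Hpf; exact: Hm1.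
- exists e2 => //; split => //.
  + rewrite inE He2 andbT. apply: (cc_connect cA _ He1).
    apply: (same_proc_connect Hc) => //; [by rewrite Hp1 Hp2 | exact: ltnW].
  + move=> f; rewrite inE => /andP [_ Hf2] Hpf; exact: Hm2.
Qed.

Lemma satb_U (P E : finType) (proc : E -> P) (pidx : E -> nat) ckpt (A B : {set E}) :
  sat_b proc pidx ckpt A -> sat_b proc pidx ckpt B -> sat_b proc pidx ckpt (A :|: B).
Proof.
move=> sA sB p.
have [e1 [He1 Hp1 Hm1] Hk1] := sA p.
have [e2 [He2 Hp2 Hm2] Hk2] := sB p.
case: (leqP (pidx e1) (pidx e2)) => Hle.
- exists e2 => //; split => //; first by rewrite inE He2 orbT.
  move=> f; rewrite inE => /orP [Hf | Hf] Hpf; last exact: Hm2.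
  exact: leq_trans (Hm1 f Hf Hpf) Hle.
- exists e1 => //; split => //; first by rewrite inE He1.
  move=> f; rewrite inE => /orP [Hf | Hf] Hpf; first exact: Hm1.
  exact: leq_trans (Hm2 f Hf Hpf) (ltnW Hle).
Qed.

Definition satbb (P E : finType) (proc : E -> P) (pidx : E -> nat)
   (ckpt : {set E}) (C : {set E}) : bool :=
  [forall p : P, [exists e, [&& e \in C, proc e == p,
     [forall f, ((f \in C) && (proc f == p)) ==> (pidx f <= pidx e)] & e \in ckpt]]].

Lemma satbP (P E : finType) (proc : E -> P) (pidx : E -> nat) ckpt C :
  reflect (sat_b proc pidx ckpt C) (satbb proc pidx ckpt C).
Proof.
apply: (iffP forallP) => H p.
- have /existsP [e /and4P [H1 /eqP H2 /forallP H3 H4]] := H p.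
  exists e => //; split => // f Hf Hpf.
  by have /implyP := H3 f; apply; rewrite Hf Hpf eqxx.
- have [e [H1 H2 H3] H4] := H p.
  apply/existsP; exists e; apply/and4P; split => //; first by rewrite H2.
  apply/forallP => f; apply/implyP => /andP [Hf /eqP Hpf]; exact: H3.
Qed.

Definition Lb (P E : finType) (proc : E -> P) (pidx : E -> nat) (edge : rel E)
   (ckpt : {set E}) : {set {set E}} :=
  [set C | [|| consistent_cut edge C && satbb proc pidx ckpt C, C == set0 | C == setT]].

Lemma Lb_I (P E : finType) (proc : E -> P) (pidx : E -> nat)
    (msg edge : rel E) (Hc : is_computation proc pidx msg edge) ckpt A B :
  A \in Lb proc pidx edge ckpt -> B \in Lb proc pidx edge ckpt ->
  A :&: B \in Lb proc pidx edge ckpt.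
Proof.
rewrite !inE => /or3P [/andP [cA /satbP sA] | /eqP -> | /eqP ->];
  last by rewrite setTI.
  2: by rewrite set0I eqxx orbT.
case/or3P => [/andP [cB /satbP sB] | /eqP -> | /eqP ->].
- by apply/orP; left; rewrite cc_I //=; apply/satbP; exact: (satb_I Hc).
- by rewrite setI0 eqxx orbT.
- by rewrite setIT cA; apply/orP; left; apply/satbP.
Qed.

Lemma Lb_U (P E : finType) (proc : E -> P) (pidx : E -> nat) (edge : rel E) ckpt A B :
  A \in Lb proc pidx edge ckpt -> B \in Lb proc pidx edge ckpt ->
  A :|: B \in Lb proc pidx edge ckpt.
Proof.
rewrite !inE => /or3P [/andP [cA /satbP sA] | /eqP -> | /eqP ->];
  last by rewrite setTU eqxx !orbT.
  2: by rewrite set0U.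
case/or3P => [/andP [cB /satbP sB] | /eqP -> | /eqP ->].
- by apply/orP; left; rewrite cc_U //=; apply/satbP; exact: satb_U.
- by rewrite setU0 cA; apply/orP; left; apply/satbP.
- by rewrite setUT eqxx !orbT.
Qed.

Lemma cutsS_Lb (P E : finType) (proc : E -> P) (pidx : E -> nat)
    (msg edge : rel E) (ckpt : {set E}) (S : rel E)
    (Hcomp : is_computation proc pidx msg edge)
    (HS : is_slice proc pidx edge ckpt S) C :
  consistent_cut S C -> C \in Lb proc pidx edge ckpt.
Proof.
move: HS; rewrite /is_slice /= => [[Hincl Hmin]] cC.
pose L := Lb proc pidx edge ckpt.
pose G0 : rel E := fun u v => [forall D in L, (v \in D) ==> (u \in D)].
have sub1 : L \subset cuts S.
  apply/subsetP => D; rewrite !inE => /or3P [/andP [c /satbP s] | /eqP -> | /eqP ->].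
  - exact: Hincl.
  - by apply/forallP => u; apply/forallP => v; rewrite inE /= implybT.
  - by apply/forallP => u; apply/forallP => v; rewrite !inE !implybT.
have sub2 : cuts G0 \subset L.
  apply/subsetP => D; rewrite inE => cD.
  have -> : D = \bigcup_(v in D) \bigcap_(F in L | v \in F) F.
    apply/setP => u; apply/idP/idP => [Hu | /bigcupP [v Hv /bigcapP Hu]].
      by apply/bigcupP; exists u => //; apply/bigcapP => F /andP [_].
    have HG : G0 u v.
      apply/forallP => F; apply/implyP => HF; apply/implyP => HvF.
      by apply: Hu; rewrite HF HvF.
    by move: (forallP (forallP cD u) v) => /implyP /(_ HG) /implyP /(_ Hv).
  apply: (big_ind (fun F => F \in L)).
  - by rewrite inE eqxx orbT.
  - by move=> A B; apply: Lb_U.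
  move=> v _; apply: (big_ind (fun F => F \in L)).
  - by rewrite inE eqxx !orbT.
  - by move=> A B; apply: (Lb_I Hcomp).
  by move=> F /andP [].
have inclG0 : forall D : {set E}, consistent_cut edge D ->
         sat_b proc pidx ckpt D -> consistent_cut G0 D.
  move=> D cD sD; apply/forallP => u; apply/forallP => v; apply/implyP => /forallP H.
  have := H D; rewrite inE cD /=.
  by have -> : satbb proc pidx ckpt D by apply/satbP.
have H1 := Hmin G0 inclG0.
have H2 := subset_leq_card sub2.
have Heq : L == cuts S.
  by rewrite -(geq_leqif (subset_leqif_cards sub1)); exact: leq_trans H1 H2.
by rewrite -/L (eqP Heq) inE.
Qed.

Theorem theorem13 (P E : finType) (proc : E -> P) (pidx : E -> nat)
    (msg edge : rel E) (ckpt : {set E}) (S : rel E)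
    (Hcomp : is_computation proc pidx msg edge)
    (Hckpt : forall e, e \in ckpt -> ~~ is_final proc pidx e)
    (HS : is_slice proc pidx edge ckpt S)
    (X : {set E}) (HX0 : X != set0) (HX : X \subset ckpt) :
  (exists C : {set E}, [/\ consistent_cut edge C, nontrivial C,
                           sat_b proc pidx ckpt C & X \subset frontier proc pidx C])
  <-> (forall x y, x \in X -> y \in X -> consistent_in proc pidx S x y).
Proof.
split.
  case=> C [cC _ sC HXf] x y Hx Hy; exists C; split.
  - by move: HS; rewrite /is_slice /= => [[Hincl _]]; apply: Hincl.
  - exact: (subsetP HXf).
  - exact: (subsetP HXf).
move=> H.
pose L := Lb proc pidx edge ckpt.
have Hw : forall x y, x \in X -> y \in X ->
    exists2 C, C \in L & (x \in frontier proc pidx C) && (y \in frontier proc pidx C).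
  move=> x y Hx Hy; have [C [cS fx fy]] := H x y Hx Hy.
  by exists C; [exact: (cutsS_Lb Hcomp HS) | rewrite fx fy].
pose A := fun x => \bigcap_(C in L | x \in frontier proc pidx C) C.
pose C := \bigcup_(x in X) A x.
have CLb : C \in L.
  apply: (big_ind (fun F => F \in L)).
  - by rewrite inE eqxx orbT.
  - by move=> A1 B1; apply: Lb_U.
  move=> v _; apply: (big_ind (fun F => F \in L)).
  - by rewrite inE eqxx !orbT.
  - by move=> A1 B1; apply: (Lb_I Hcomp).
  by move=> F /andP [].
have Hfr : X \subset frontier proc pidx C.
  apply/subsetP => x Hx; rewrite inE; apply/andP; split.
  - apply/bigcupP; exists x => //; apply/bigcapP => D /andP [_].
    by rewrite inE => /andP [].
  - apply/forallP => f; apply/implyP => Hxf; apply/negP => /bigcupP [z Hz /bigcapP Hf].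
    have [D DLb /andP [fz fx]] := Hw z x Hz Hx.
    have HfD : f \in D by apply: Hf; rewrite DLb fz.
    by move: fx; rewrite inE => /andP [_ /forallP /(_ f)]; rewrite Hxf HfD.
have [x0 Hx0] : exists x, x \in X by apply/set0Pn.
have xin : x0 \in C by move: (subsetP Hfr x0 Hx0); rewrite inE => /andP [].
have [f0 Hf0] : exists f, psucc proc pidx x0 f.
  move: (Hckpt x0 (subsetP HX x0 Hx0)); rewrite /is_final => /forallPn [f].
  by rewrite negbK; exists f.
have fnot : f0 \notin C.
  move: (subsetP Hfr x0 Hx0); rewrite inE => /andP [_ /forallP /(_ f0)].
  by rewrite Hf0.
exists C; move: CLb; rewrite inE => /or3P [/andP [cC /satbP sC] | /eqP C0 | /eqP CT].
- split => //; apply/andP; split; apply/eqP => E'.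
  + by rewrite E' inE in xin.
  + by rewrite E' inE in fnot.
- by rewrite C0 inE in xin.
- by rewrite CT inE in fnot.
Qed.
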